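(* Let $\beta>0$ and let $V\in\mathbb R^{d\times d}$ be symmetric and negative definite. Let $(x_1(t),x_2(t))\in\mathbb S^{d-1}\times\mathbb S^{d-1}$ solve the two-particle system \[ \dot x_i=P^\perp_{x_i}\Big(\frac1{Z_i}\sum_{j=1}^2 e^{\beta\langle x_i,Vx_j\rangle}Vx_j\Big),\qquad Z_i=\sum_{k=1}^2 e^{\beta\langle x_i,Vx_k\rangle},\quad i=1,2. \] Then $\rho(t):=\langle x_1(t),x_2(t)\rangle$ satisfies $\dot\rho(t)<0$ whenever $\rho(t)\in(-1,1)$; in particular $\rho$ is strictly decreasing on any time interval on which $\rho(t)\in(-1,1)$.
   Context: $P^\perp_xy=y-\langle x,y\rangle x$ denotes the orthogonal projection onto $T_x\mathbb S^{d-1}$. *)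

(* Defs.v *)
From HB Require Import structures.
From mathcomp Require Import all_boot all_order all_algebra.
From mathcomp Require Import all_classical all_reals all_analysis.
Set Implicit Arguments. Unset Strict Implicit. Unset Printing Implicit Defensive.
Import Order.TTheory GRing.Theory Num.Theory.
Import numFieldNormedType.Exports.
Local Open Scope ring_scope.

Definition dotp (R : realType) (d : nat) (u v : 'cV[R]_d) : R :=
  \sum_(i < d) u i 0 * v i 0.

Definition projT (R : realType) (d : nat) (x y : 'cV[R]_d) : 'cV[R]_d :=
  y - dotp x y *: x.

Definition sym_negdef (R : realType) (d : nat) (V : 'M[R]_d) : Prop :=
  V^T = V /\ forall v : 'cV[R]_d, v != 0 -> dotp v (V *m v) < 0.

Definition Zpart (R : realType) (d : nat) (beta : R) (V : 'M[R]_d)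
  (x xa xb : 'cV[R]_d) : R :=
  expR (beta * dotp x (V *m xa)) + expR (beta * dotp x (V *m xb)).

(* Right-hand side of the equation for particle x, with the two particles xa, xb:
   P^perp_x ( (1/Z) sum_{j} e^{beta <x, V x_j>} V x_j ) *)
Definition rhs2 (R : realType) (d : nat) (beta : R) (V : 'M[R]_d)
  (x xa xb : 'cV[R]_d) : 'cV[R]_d :=
  projT x ((Zpart beta V x xa xb)^-1 *:
    (expR (beta * dotp x (V *m xa)) *: (V *m xa)
     + expR (beta * dotp x (V *m xb)) *: (V *m xb))).

(* Main.v *)
Require Import Defs.
From HB Require Import structures.
From mathcomp Require Import all_boot all_order all_algebra.
From mathcomp Require Import all_classical all_reals all_analysis.
From mathcomp Require Import ring lra.
Import Order.TTheory GRing.Theory Num.Theory.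
Import numFieldNormedType.Exports.
Local Open Scope ring_scope.

Section S.
Variable R : realType.

Lemma expR_cube (B : R) : 0 <= B -> (1 + B/3)^+3 <= expR B.
Proof.
move=> hB.
have -> : B = 3%:R * (B/3) by field.
rewrite expRM_natl.
have h := expR_ge1Dx (B/3).
have -> : 3%:R * (B / 3) / 3 = B/3 by field.
apply: lerXn2r => //; rewrite ?nnegrE //; lra.
Qed.

Lemma expR_half_ge (v : R) : 0 <= v -> v <= expR (v/2).
Proof.
move=> hv.
have -> : v/2 = 2%:R * (v/4) by field.
rewrite expRM_natl.
have h := expR_ge1Dx (v/4).
have h2 : (1 + v/4)^+2 <= expR (v/4) ^+ 2.
  apply: lerXn2r => //; rewrite ?nnegrE //; lra.
apply: le_trans h2; rewrite expr2; have := sqr_ge0 (1 - v/4); rewrite expr2; nra.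
Qed.

Lemma coreL0 (f A B : R) : 0 <= f -> 0 < A -> 0 < B -> f^+2 <= A * B ->
  f * (expR f - expR (-f)) <= A * (expR f + expR (-f) + expR B + expR (-B)).
Proof.
move=> hf hA hB hAB.
have ef := expR_gt0 f; have enf := expR_gt0 (-f);
have eB := expR_gt0 B; have enB := expR_gt0 (-B).
have g1 := expR_ge1Dx f; have g2 := expR_ge1Dx (-f).
case: (lerP f (1/2)) => hf2.
  have hinv : expR f * expR (-f) = 1 by rewrite expRN mulfV // gt_eqF.
  have d3 : expR f - expR (-f) <= 3 * f.
    (* e^f <= 1/(1-f) <= 1+2f *)
    have : expR f * (1 - f) <= 1 by nra.
    nra.
  have c := expR_cube B (ltW hB : 0 <= B).
  have : 3 * (A * B) <= A * (2 + (1 + B/3)^+3).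
    have : 3 * B <= 2 + (1 + B/3)^+3.
      have h1 := sqr_ge0 (B-3); have h2 : 0 <= B*B*B by rewrite !mulr_ge0 // ltW.
      rewrite !exprS expr0; rewrite expr2 in h1; nra.
    nra.
  nra.
case: (lerP f A) => hfA.
  nra.
have key : (f - A) <= A * expR (B - f).
  set v := (f - A) / A.
  have hv : 0 <= v by rewrite /v divr_ge0 //; lra.
  have hvA : v * A = f - A by rewrite /v divfK // gt_eqF.
  have hBf : v / 2 <= B - f.
    have : f * (f - A) <= A * (B - f) by nra.
    nra.
  have := expR_half_ge v hv.
  rewrite -(ler_expR) in hBf.
  move=> h.
  have : v <= expR (B - f) by apply: le_trans h hBf.
  move=> h'; nra.
have : expR B = expR f * expR (B - f) by rewrite -expRD; congr expR; ring.
nra.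
Qed.

Lemma coreL (x A B : R) : 0 < A -> 0 < B -> x^+2 <= A * B ->
  x * (expR x - expR (-x)) <= A * (expR x + expR (-x) + expR B + expR (-B)).
Proof.
move=> hA hB h; case: (lerP 0 x) => hx; first exact: coreL0.
have hx' : 0 <= - x by lra.
have := @coreL0 (-x) A B hx' hA hB; rewrite sqrrN opprK => /(_ h) H.
have -> : x * (expR x - expR (- x)) = - x * (expR (- x) - expR x) by ring.
apply: le_trans H _; lra.
Qed.

Lemma keyN (a b c r beta : R) : 0 < beta -> a + b - 2 * c < 0 -> a + b + 2 * c < 0 ->
  c ^+ 2 <= a * b -> -1 < r -> r < 1 ->
  (expR (beta * c) + expR (beta * b)) *
     (expR (beta * a) * c + expR (beta * c) * b - r * (expR (beta * a) * a + expR (beta * c) * c))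
  + (expR (beta * a) + expR (beta * c)) *
     (expR (beta * c) * a + expR (beta * b) * c - r * (expR (beta * c) * c + expR (beta * b) * b)) < 0.
Proof.
move=> hb h1 h2 hc hr1 hr2.
set Ea := expR (beta * a); set Eb := expR (beta * b); set Ec := expR (beta * c).
set N1 := (a + b - 2 * c) * (Ec * Ec - Ea * Eb).
set A := - (a + b + 2 * c).
set Nm := - A * (Ea + Ec) * (Ec + Eb) + (a - b) * (Ea - Eb) * Ec.
have hN1 : N1 < 0.
  rewrite /N1 pmulr_llt0; first lra.
  rewrite subr_gt0 /Ea /Eb /Ec -!expRD ltr_expR; nra.
have hNm : Nm <= 0.
  set k := beta / 2.
  have hk : 0 < k by rewrite /k; lra.
  set x := k * (a - b); set y := k * (2 * c - a - b).
  set M := expR (k * (a + b)).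
  have eA : Ea = M * expR x by rewrite /Ea /M /x -expRD; congr expR; rewrite /k; field.
  have eB : Eb = M * expR (-x) by rewrite /Eb /M /x -expRD; congr expR; rewrite /k; field.
  have eC : Ec = M * expR y by rewrite /Ec /M /y -expRD; congr expR; rewrite /k; field.
  have ix : expR x * expR (-x) = 1 by rewrite expRN mulfV // gt_eqF // expR_gt0.
  have iy : expR y * expR (-y) = 1 by rewrite expRN mulfV // gt_eqF // expR_gt0.
  have E : Nm = M^+2 * expR y * (- A * (expR x + expR (-x) + expR y + expR (-y))
             + (a - b) * (expR x - expR (-x))).
    apply/eqP; rewrite -subr_eq0; apply/eqP.
    rewrite /Nm eA eB eC.
    transitivity (- A * M^+2 * (expR x * expR (-x) - expR y * expR (-y))); first ring.
    by rewrite ix iy subrr mulr0.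
  have hkA : 0 < k * A by rewrite /A mulr_gt0 //; lra.
  have hy : 0 < y by rewrite /y mulr_gt0 //; lra.
  have hxy : x ^+ 2 <= k * A * y.
    rewrite /x /y /A !expr2.
    have : (a - b) * (a - b) <= - (a + b + 2 * c) * (2 * c - a - b) by rewrite expr2 in hc; nra.
    move=> H; have hk2 : 0 < k * k by rewrite mulr_gt0.
    have -> : k * (a - b) * (k * (a - b)) = (k * k) * ((a - b) * (a - b)) by ring.
    have -> : k * - (a + b + 2 * c) * (k * (2 * c - a - b)) = (k * k) * (- (a + b + 2 * c) * (2 * c - a - b)) by ring.
    by rewrite ler_pM2l.
  have C := @coreL x (k * A) y hkA hy hxy.
  have Br : - A * (expR x + expR (-x) + expR y + expR (-y)) + (a - b) * (expR x - expR (-x)) <= 0.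
    have : k * (- A * (expR x + expR (-x) + expR y + expR (-y)) + (a - b) * (expR x - expR (-x))) <= 0.
      have -> : k * (- A * (expR x + expR (-x) + expR y + expR (-y)) + (a - b) * (expR x - expR (-x)))
        = x * (expR x - expR (- x)) - k * A * (expR x + expR (- x) + expR y + expR (- y)) by rewrite /x; ring.
      lra.
    by rewrite pmulr_rle0.
  rewrite E; apply: mulr_ge0_le0 => //.
  by rewrite mulr_ge0 // ?expr2 ?mulr_ge0 // ltW // expR_gt0.
have key : forall X : R, X = (1 + r) / 2 * N1 + (1 - r) / 2 * Nm -> X < 0.
  move=> X ->.
  have h3 : (1 + r) / 2 * N1 < 0 by rewrite pmulr_rlt0 //; lra.
  have h4 : (1 - r) / 2 * Nm <= 0 by rewrite pmulr_rle0 //; lra.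
  lra.
apply: key; by rewrite /N1 /Nm /A; field.
Qed.
Lemma final (beta a b c r : R) : 0 < beta ->
  a < 0 ->
  1 ^+ 2 * a + 2 * 1 * -1 * c + (-1) ^+ 2 * b < 0 ->
  1 ^+ 2 * a + 2 * 1 * 1 * c + 1 ^+ 2 * b < 0 ->
  c ^+ 2 * a + 2 * c * - a * c + (- a) ^+ 2 * b <= 0 ->
  -1 < r ->
  r < 1 ->
  (expR (beta * c) + expR (beta * b))^-1 *
  (expR (beta * c) * a + expR (beta * b) * c) -
  (expR (beta * c) + expR (beta * b))^-1 *
  (expR (beta * c) * c + expR (beta * b) * b) * r +
  ((expR (beta * a) + expR (beta * c))^-1 *
   (expR (beta * a) * c + expR (beta * c) * b) -
   (expR (beta * a) + expR (beta * c))^-1 *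
   (expR (beta * a) * a + expR (beta * c) * c) * r) < 0.
Proof.
move=> hb q0 q1 q2 q3 h1 h2.
rewrite expr1n sqrrN expr1n in q1; rewrite expr1n in q2; rewrite sqrrN in q3.
have hq1 : a + b - 2 * c < 0 by lra.
have hq2 : a + b + 2 * c < 0 by lra.
have hcc : c ^+ 2 <= a * b.
  have : a * (a * b - c ^+ 2) <= 0 by rewrite !expr2 in q3 *; nra.
  rewrite nmulr_rle0 // => H; lra.
have K := @keyN a b c r beta hb hq1 hq2 hcc h1 h2.
have ea := expR_gt0 (beta * a); have eb := expR_gt0 (beta * b); have ec := expR_gt0 (beta * c).
have hZ : 0 < (expR (beta * a) + expR (beta * c)) * (expR (beta * c) + expR (beta * b)).
  by apply: mulr_gt0; lra.
rewrite -(pmulr_llt0 _ hZ).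
match goal with |- is_true (?L * _ < 0) => have -> : L * ((expR (beta * a) + expR (beta * c)) * (expR (beta * c) + expR (beta * b))) =
  (expR (beta * c) + expR (beta * b)) *
     (expR (beta * a) * c + expR (beta * c) * b - r * (expR (beta * a) * a + expR (beta * c) * c))
  + (expR (beta * a) + expR (beta * c)) *
     (expR (beta * c) * a + expR (beta * b) * c - r * (expR (beta * c) * c + expR (beta * b) * b)) end.
  field; apply/andP; split; rewrite gt_eqF //; lra.
exact: K.
Qed.
End S.
Section D.
Variables (R : realType) (d : nat).
Implicit Types (u v w : 'cV[R]_d).

Lemma dotpC u v : dotp u v = dotp v u.
Proof. by apply: eq_bigr => i _; rewrite mulrC. Qed.

Lemma dotpDr u v w : dotp u (v + w) = dotp u v + dotp u w.
Proof. by rewrite /dotp -big_split; apply: eq_bigr => i _; rewrite !mxE mulrDr. Qed.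

Lemma dotpZr u v (k : R) : dotp u (k *: v) = k * dotp u v.
Proof. by rewrite /dotp mulr_sumr; apply: eq_bigr => i _; rewrite !mxE mulrCA. Qed.

Lemma dotpNr u v : dotp u (- v) = - dotp u v.
Proof. by rewrite -scaleN1r dotpZr mulN1r. Qed.

Lemma dotpBr u v w : dotp u (v - w) = dotp u v - dotp u w.
Proof. by rewrite dotpDr dotpNr. Qed.

Lemma dotpDl u v w : dotp (v + w) u = dotp v u + dotp w u.
Proof. by rewrite dotpC dotpDr !(dotpC u). Qed.

Lemma dotpZl u v (k : R) : dotp (k *: v) u = k * dotp v u.
Proof. by rewrite dotpC dotpZr dotpC. Qed.

Lemma dotpNl u v : dotp (- v) u = - dotp v u.
Proof. by rewrite dotpC dotpNr dotpC. Qed.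

Lemma dotpBl u v w : dotp (v - w) u = dotp v u - dotp w u.
Proof. by rewrite dotpDl dotpNl. Qed.

Lemma dotp0l u : dotp 0 u = 0.
Proof. by rewrite /dotp big1 // => i _; rewrite mxE mul0r. Qed.

Lemma dotp_sym (V : 'M[R]_d) u v : V^T = V -> dotp u (V *m v) = dotp v (V *m u).
Proof.
move=> hV; rewrite /dotp.
under eq_bigr => i _ do rewrite mxE mulr_sumr.
under [RHS]eq_bigr => i _ do rewrite mxE mulr_sumr.
rewrite exchange_big; apply: eq_bigr => i _; apply: eq_bigr => j _.
have -> : V i j = V j i by rewrite -{1}hV mxE.
ring.
Qed.

Lemma quadf (V : 'M[R]_d) u v (al ga : R) : V^T = V ->
  dotp (al *: u + ga *: v) (V *m (al *: u + ga *: v)) =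
  al^+2 * dotp u (V *m u) + 2 * al * ga * dotp u (V *m v) + ga^+2 * dotp v (V *m v).
Proof.
move=> hV; rewrite mulmxDr -!scalemxAr !dotpDl !dotpDr !dotpZl !dotpZr.
rewrite (dotp_sym V v u hV); ring.
Qed.

Lemma dotp_proj y x (k e1 e2 : R) u v :
  dotp y (projT x (k *: (e1 *: u + e2 *: v))) =
  k * (e1 * dotp y u + e2 * dotp y v) - k * (e1 * dotp x u + e2 * dotp x v) * dotp y x.
Proof.
rewrite /projT dotpBr !dotpZr dotpDr !dotpZr dotpDr !dotpZr; ring.
Qed.
End D.

Theorem lemma6p3 (R : realType) (d : nat) (beta : R) (V : 'M[R]_d)
  (T0 T1 : R) (x1 x2 : R -> 'cV[R]_d) :
  (0 < beta)%R ->
  sym_negdef V ->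
  (T0 < T1)%R ->
  (* the trajectories stay on the unit sphere S^{d-1} *)
  (forall t, t \in `]T0, T1[ -> dotp (x1 t) (x1 t) = 1 /\ dotp (x2 t) (x2 t) = 1) ->
  (* the two-particle ODE, componentwise *)
  (forall t, t \in `]T0, T1[ -> forall k : 'I_d,
     is_derive t (1:R) (fun s => x1 s k 0) (rhs2 beta V (x1 t) (x1 t) (x2 t) k 0) /\
     is_derive t (1:R) (fun s => x2 s k 0) (rhs2 beta V (x2 t) (x1 t) (x2 t) k 0)) ->
  let rho := fun t => dotp (x1 t) (x2 t) in
  (forall t, t \in `]T0, T1[ -> (-1 < rho t < 1)%R ->
     derivable rho t 1 /\ (derive1 rho t < 0)%R) /\
  (forall a b, T0 < a -> a < b -> b < T1 ->
     (forall t, a <= t <= b -> (-1 < rho t < 1)%R) -> rho b < rho a)%R.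
Proof.
move=> hb [hVt hVn] hT hsph hode rho.
pose r1 t := rhs2 beta V (x1 t) (x1 t) (x2 t).
pose r2 t := rhs2 beta V (x2 t) (x1 t) (x2 t).
pose df t := dotp (x1 t) (r2 t) + dotp (x2 t) (r1 t).
have Hd : forall t, t \in `]T0, T1[ -> is_derive t 1 rho (df t).
  move=> t ht.
  have -> : rho = \sum_(i < d) ((fun s => x1 s i 0) * (fun s => x2 s i 0)).
    by rewrite fct_sumE; apply/funext => s /=.
  apply: is_derive_eq.
    apply: is_derive_sum => i; apply: is_deriveM; [exact: (hode t ht i).1 | exact: (hode t ht i).2].
  rewrite /df /dotp -big_split; apply: eq_bigr => i _ /=.
  by [].
have Hneg : forall t, t \in `]T0, T1[ -> -1 < rho t < 1 -> df t < 0.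
  move=> t ht /andP[h1 h2].
  have [s1 s2] := hsph t ht.
  rewrite /rho in h1 h2.
  move: h1 h2 s1 s2; rewrite /df /r1 /r2.
  move: (x1 t) (x2 t) => X1 X2 h1 h2 s1 s2.
  have Qle : forall v, dotp v (V *m v) <= 0.
    move=> v; case: (eqVneq v 0) => [->|/hVn/ltW //]; by rewrite dotp0l.
  have hc2 : dotp X2 (V *m X1) = dotp X1 (V *m X2) by rewrite dotp_sym.
  have ne1 : X1 - X2 != 0.
    apply/eqP => E; have E' : X1 = X2 by apply/eqP; rewrite -subr_eq0 E.
    by move: h2; rewrite E' s2 ltxx.
  have ne2 : X1 + X2 != 0.
    apply/eqP => E; have E' : X2 = - X1 by apply/eqP; rewrite -addr_eq0 addrC E.
    by move: h1; rewrite E' dotpNr s1 ltxx.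
  have ne0 : X1 != 0 by apply/eqP => E; move: s1; rewrite E dotp0l => /eqP; rewrite eq_sym oner_eq0.
  have q1 := hVn _ ne1; have q2 := hVn _ ne2; have q0 := hVn _ ne0.
  have q3 := Qle (dotp X1 (V *m X2) *: X1 + (- dotp X1 (V *m X1)) *: X2).
  rewrite quadf // in q3.
  have E1 : X1 - X2 = 1 *: X1 + (-1) *: X2 by rewrite scale1r scaleN1r.
  have E2 : X1 + X2 = 1 *: X1 + 1 *: X2 by rewrite !scale1r.
  rewrite E1 quadf // in q1; rewrite E2 quadf // in q2.
  rewrite !dotp_proj /Zpart hc2 (@dotpC _ _ X2 X1).
  move: q0 q1 q2 q3 h1 h2; clear -hb.
  move: (dotp X1 (V *m X1)) (dotp X2 (V *m X2)) (dotp X1 (V *m X2)) (dotp X1 X2) => a b c r.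
  exact: final.
split.
  move=> t ht hr; split; first by case: (Hd t ht).
  by case: (Hd t ht) => _ E; rewrite derive1E E; apply: Hneg.
move=> a b ha hab hb' hr.
have sub : forall t, a <= t <= b -> t \in `]T0, T1[.
  by move=> t /andP[h1 h2]; rewrite in_itv /=; apply/andP; split; lra.
have dab : {in `[a, b], forall x, derivable rho x 1}.
  move=> t; rewrite in_itv /= => ht.
  by case: (Hd t (sub t ht)).
have cont := derivable_within_continuous dab.
have dd : forall x, x \in `]a, b[ -> is_derive x 1 rho (df x).
  move=> x; rewrite in_itv /= => /andP[h1 h2]; apply: Hd; apply: sub.
  by apply/andP; split; apply: ltW.
have [c hc E] := @MVT R rho df a b hab dd cont.
have hcab : a <= c <= b by move: hc; rewrite in_itv /= => /andP[h1 h2]; apply/andP; split; apply: ltW.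
have := Hneg c (sub c hcab) (hr c hcab).
move=> H; have : df c * (b - a) < 0 by rewrite pmulr_llt0 // subr_gt0.
lra.
Qed.
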